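(* Let $a,b,c,d>0$, $\theta>0$ satisfy $-(\theta a+\theta^2 b)<(\theta-1)(\theta+1)^2<\theta c+\theta^2 d$, and consider on $\mathcal{I}=[0,1]^2$ the system $$\dot x=x(1-x)\big[xr(-c+d-a+b)+x(a-b)-r(d+b)+b\big]+\mu(1-2x),\qquad \dot r=r(1-r)\big[\theta x-(1-x)\big].$$ Then for every $\mu\in(0,1]$ the boundary $\partial\mathcal{I}$ is repelling.
   Context: The boundary $\partial\mathcal{I}$ is the union of the four sides $\mathcal{B}_t=\{r=1\}$, $\mathcal{B}_b=\{r=0\}$, $\mathcal{B}_l=\{x=0\}$, $\mathcal{B}_r=\{x=1\}$ of the square. The boundary is called repelling if there is $\delta>0$ such that every solution $(x(t),r(t))$ with initial condition in the open square $(0,1)^2$ satisfies $\liminf_{t\to\infty}\operatorname{dist}((x(t),r(t)),\partial\mathcal{I})>\delta$, i.e. trajectories starting in the interior eventually stay a uniform positive distance away from the boundary. *)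

(* Defs.v *)
From Stdlib Require Import Reals.
From Coquelicot Require Import Coquelicot.
Open Scope R_scope.

Definition in_boundary (p : R * R) : Prop :=
  0 <= fst p <= 1 /\ 0 <= snd p <= 1 /\
  (fst p = 0 \/ fst p = 1 \/ snd p = 0 \/ snd p = 1).

Definition dist_boundary (p : R * R) : R :=
  real (Glb_Rbar (fun d => exists q, in_boundary q /\
          d = sqrt ((fst p - fst q) ^ 2 + (snd p - snd q) ^ 2))).

Definition fx (a b c d mu x r : R) : R :=
  x * (1 - x) * (x * r * (- c + d - a + b) + x * (a - b) - r * (d + b) + b)
  + mu * (1 - 2 * x).
Definition fr (theta x r : R) : R :=
  r * (1 - r) * (theta * x - (1 - x)).

Definition is_solution (a b c d theta mu : R) (x r : R -> R) : Prop :=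
  (forall t, 0 <= t -> continuity_pt x t /\ continuity_pt r t) /\
  (forall t, 0 < t ->
     derivable_pt_lim x t (fx a b c d mu (x t) (r t)) /\
     derivable_pt_lim r t (fr theta (x t) (r t))).

(* The boundary is repelling: there is delta > 0 such that every solution
   starting in the open square satisfies
   liminf_{t -> oo} dist((x t, r t), boundary) > delta.
   "liminf > delta" is written out literally: for some eps > 0 the
   distance is eventually >= delta + eps. *)
Definition boundary_repelling (a b c d theta mu : R) : Prop :=
  exists delta, 0 < delta /\
    forall x r : R -> R,
      is_solution a b c d theta mu x r ->
      0 < x 0 < 1 -> 0 < r 0 < 1 ->
      exists eps, 0 < eps /\ exists T, forall t, T <= t ->
        delta + eps <= dist_boundary (x t, r t).

(* Main.v *)
Require Import Defs.
From Stdlib Require Import Reals Lra Psatz Classical.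
From Coquelicot Require Import Coquelicot.
Open Scope R_scope.

Lemma D_plus f g x l1 l2 : derivable_pt_lim f x l1 -> derivable_pt_lim g x l2 ->
  derivable_pt_lim (fun u => f u + g u) x (l1 + l2).
Proof. intros; now apply derivable_pt_lim_plus. Qed.
Lemma D_minus f g x l1 l2 : derivable_pt_lim f x l1 -> derivable_pt_lim g x l2 ->
  derivable_pt_lim (fun u => f u - g u) x (l1 - l2).
Proof. intros; now apply derivable_pt_lim_minus. Qed.
Lemma D_mult f g x l1 l2 : derivable_pt_lim f x l1 -> derivable_pt_lim g x l2 ->
  derivable_pt_lim (fun u => f u * g u) x (l1 * g x + f x * l2).
Proof. intros; now apply derivable_pt_lim_mult. Qed.
Lemma D_comp f g x l1 l2 : derivable_pt_lim f x l1 -> derivable_pt_lim g (f x) l2 ->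
  derivable_pt_lim (fun u => g (f u)) x (l2 * l1).
Proof. intros; now apply (derivable_pt_lim_comp f g). Qed.
Lemma D_const a x : derivable_pt_lim (fun _ => a) x 0.
Proof. apply derivable_pt_lim_const. Qed.
Lemma D_id x : derivable_pt_lim (fun u => u) x 1.
Proof. apply derivable_pt_lim_id. Qed.
Lemma D_eq f x l l' : l = l' -> derivable_pt_lim f x l -> derivable_pt_lim f x l'.
Proof. intros ->; auto. Qed.

Lemma C_plus f g x : continuity_pt f x -> continuity_pt g x -> continuity_pt (fun u => f u + g u) x.
Proof. intros; now apply continuity_pt_plus. Qed.
Lemma C_minus f g x : continuity_pt f x -> continuity_pt g x -> continuity_pt (fun u => f u - g u) x.
Proof. intros; now apply continuity_pt_minus. Qed.
Lemma C_mult f g x : continuity_pt f x -> continuity_pt g x -> continuity_pt (fun u => f u * g u) x.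
Proof. intros; now apply continuity_pt_mult. Qed.
Lemma C_const a x : continuity_pt (fun _ => a) x.
Proof. apply continuity_pt_const. intros u v; reflexivity. Qed.
Lemma C_comp f g x : continuity_pt f x -> continuity_pt g (f x) -> continuity_pt (fun u => g (f u)) x.
Proof. intros; now apply (continuity_pt_comp f g). Qed.
Lemma C_der f x l : derivable_pt_lim f x l -> continuity_pt f x.
Proof. intros H; apply derivable_continuous_pt; exists l; exact H. Qed.

Lemma cont_nbhd f s : continuity_pt f s -> forall eps, 0 < eps ->
  exists del, 0 < del /\ forall x, Rabs (x - s) < del -> Rabs (f x - f s) < eps.
Proof.
  intros H eps he.
  unfold continuity_pt, continue_in, limit1_in, limit_in in H; simpl in H.
  destruct (H eps he) as [del [hd H']]. exists del; split; auto.
  intros x hx. destruct (Req_dec x s) as [->|n].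
  - unfold Rminus; rewrite Rplus_opp_r, Rabs_R0; auto.
  - apply H'. split. split; [exact I | auto]. exact hx.
Qed.

Lemma mvt_open f df a b : a < b -> (forall t, a <= t <= b -> continuity_pt f t) ->
  (forall t, a < t < b -> derivable_pt_lim f t (df t)) ->
  exists c, a < c < b /\ f b - f a = df c * (b - a).
Proof.
  intros hab hc hd.
  assert (pr1 : forall c, a < c < b -> derivable_pt f c)
    by (intros c hc'; exists (df c); apply hd; auto).
  assert (pr2 : forall c, a < c < b -> derivable_pt id c)
    by (intros; apply derivable_pt_id).
  destruct (MVT f id a b pr1 pr2 hab hc
     (fun c _ => derivable_continuous_pt _ _ (derivable_pt_id c))) as (c & P & E).
  exists c; split; auto.
  rewrite (derive_pt_eq_0 f c (df c) (pr1 c P) (hd c P)) in E.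
  rewrite (derive_pt_eq_0 id c 1 (pr2 c P) (derivable_pt_lim_id c)) in E.
  unfold id in E. rewrite Rmult_1_r in E. rewrite <- E; ring.
Qed.


Lemma LB (y dy : R -> R) L eta : 0 < eta ->
  (forall t, 0 <= t -> continuity_pt y t) ->
  (forall t, 0 < t -> derivable_pt_lim y t (dy t)) ->
  (forall t, 0 < t -> y t <= L -> eta <= dy t) ->
  forall t, 0 <= t -> Rmin L (y 0 + eta * t) <= y t.
Proof.
  intros he hc hd hdy t ht.
  destruct (Rle_or_lt (Rmin L (y 0 + eta*t)) (y t)) as [h|h]; [exact h|exfalso].
  assert (hL : y t < L) by (eapply Rlt_le_trans; [exact h | apply Rmin_l]).
  assert (hl2 : y t < y 0 + eta * t) by (eapply Rlt_le_trans; [exact h | apply Rmin_r]).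
  destruct (Req_dec t 0) as [->|tn0]. { rewrite Rmult_0_r, Rplus_0_r in hl2; lra. }
  assert (tp : 0 < t) by lra.
  destruct (classic (exists u, 0 <= u <= t /\ L <= y u)) as [[u0 hu0]|hno].
  - set (E := fun u => 0 <= u <= t /\ L <= y u).
    assert (bE : bound E) by (exists t; intros u hu; apply hu).
    destruct (completeness E bE (ex_intro _ u0 hu0)) as [s [hub hlub]].
    assert (s_le_t : s <= t) by (apply hlub; intros u hu; apply hu).
    assert (u0_le_s : u0 <= s) by (apply hub; exact hu0).
    assert (hys : L <= y s).
    { destruct (Rle_or_lt L (y s)) as [?|hlt]; [assumption|exfalso].
      destruct (cont_nbhd y s (hc s ltac:(lra)) (L - y s) ltac:(lra)) as [del [hdel hn]].
      assert (s <= s - del/2); [|lra].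
      apply hlub. intros u [hu1 hu2].
      destruct (Rle_or_lt u (s - del/2)) as [?|hgt]; [assumption|exfalso].
      assert (u <= s) by (apply hub; split; auto).
      assert (Rabs (y u - y s) < L - y s) by (apply hn; apply Rabs_def1; lra).
      apply Rabs_def2 in H0. lra. }
    assert (st : s < t) by (destruct (Req_dec s t) as [->|]; lra).
    destruct (mvt_open y dy s t st) as [c [[hc1 hc2] hE]].
    { intros; apply hc; lra. }
    { intros; apply hd; lra. }
    assert (hyc : y c < L).
    { destruct (Rlt_or_le (y c) L) as [?|hge]; [assumption|].
      assert (c <= s) by (apply hub; split; [lra|auto]). lra. }
    assert (eta <= dy c) by (apply hdy; lra).
    assert (dy c * (t - s) > 0) by (apply Rmult_lt_0_compat; lra).
    lra.
  - destruct (mvt_open y dy 0 t tp) as [c [[hc1 hc2] hE]].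
    { intros; apply hc; lra. }
    { intros; apply hd; lra. }
    assert (hyc : y c < L).
    { destruct (Rlt_or_le (y c) L) as [?|hge]; [assumption|].
      exfalso; apply hno; exists c; split; [lra|auto]. }
    assert (eta <= dy c) by (apply hdy; lra).
    assert (eta * t <= dy c * t) by (apply Rmult_le_compat_r; lra).
    lra.
Qed.

Lemma LB_ev (y dy : R -> R) L eta : 0 < eta ->
  (forall t, 0 <= t -> continuity_pt y t) ->
  (forall t, 0 < t -> derivable_pt_lim y t (dy t)) ->
  (forall t, 0 < t -> y t <= L -> eta <= dy t) ->
  exists T, 0 <= T /\ forall t, T <= t -> L <= y t.
Proof.
  intros he hc hd hdy.
  exists (Rmax 0 ((L - y 0) / eta)). split; [apply Rmax_l|].
  intros t ht.
  assert (h0 : 0 <= t) by (eapply Rle_trans; [apply Rmax_l| exact ht]).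
  assert (h1 : (L - y 0)/eta <= t) by (eapply Rle_trans; [apply Rmax_r| exact ht]).
  pose proof (LB y dy L eta he hc hd hdy t h0) as H.
  assert (L <= y 0 + eta * t).
  { apply (Rmult_le_compat_l eta) in h1; [|lra].
    unfold Rdiv in h1. rewrite <- Rmult_assoc, (Rmult_comm eta), Rmult_assoc,
      Rinv_r, Rmult_1_r in h1 by lra. lra. }
  rewrite Rmin_left in H by auto. auto.
Qed.

Lemma posA (y k m : R -> R) : 0 < y 0 ->
  (forall t, 0 <= t -> continuity_pt y t) ->
  (forall t, 0 <= t -> continuity_pt k t) ->
  (forall t, 0 < t -> 0 <= m t) ->
  (forall t, 0 < t -> derivable_pt_lim y t (y t * k t + m t)) ->
  forall t, 0 <= t -> 0 < y t.
Proof.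
  intros y0 hc hk hm hd t ht.
  destruct (Rlt_or_le 0 (y t)) as [h|h]; [exact h| exfalso].
  set (E := fun u => 0 <= u <= t /\ forall v, 0 <= v <= u -> 0 < y v).
  assert (bE : bound E) by (exists t; intros u hu; apply hu).
  assert (E0 : E 0).
  { split; [lra|]. intros v hv. replace v with 0 by lra. auto. }
  destruct (completeness E bE (ex_intro _ 0 E0)) as [s [hub hlub]].
  assert (s_le_t : s <= t) by (apply hlub; intros u hu; apply hu).
  assert (s_ge0 : 0 <= s) by (apply hub; exact E0).
  assert (A1 : forall v, 0 <= v < s -> 0 < y v).
  { intros v hv. destruct (classic (exists u, E u /\ v < u)) as [[u [[_ Hu] hvu]]|hno].
    - apply Hu; lra.
    - exfalso. assert (s <= v); [|lra]. apply hlub. intros u hu.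
      destruct (Rle_or_lt u v); auto. exfalso; apply hno; exists u; auto. }
  assert (A2 : y s <= 0).
  { destruct (Rle_or_lt (y s) 0) as [?|hp]; [assumption|exfalso].
    destruct (Req_dec s t) as [->|snt]; [lra|].
    destruct (cont_nbhd y s (hc s s_ge0) (y s) hp) as [del [hdel hn]].
    assert (Eu : E (Rmin (s + del/2) t)).
    { split. split; [apply Rmin_glb; lra| apply Rmin_r].
      intros v hv. destruct (Rlt_or_le v s). apply A1; lra.
      assert (v <= s + del/2) by (eapply Rle_trans; [apply hv| apply Rmin_l]).
      assert (Rabs (y v - y s) < y s) by (apply hn; apply Rabs_def1; lra).
      apply Rabs_def2 in H1. lra. }
    apply hub in Eu. unfold Rmin in Eu. destruct (Rle_dec (s + del/2) t); lra. }
  assert (sp : 0 < s) by (destruct (Req_dec s 0) as [->|]; lra).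
  destruct (continuity_ab_min k 0 s s_ge0 (fun c hc' => hk c ltac:(lra))) as [mx [hmx _]].
  set (B := - k mx).
  set (z := fun u => y u * exp (B * u)).
  assert (hdz : forall u, 0 < u -> derivable_pt_lim z u
     ((y u * k u + m u) * exp (B*u) + y u * (exp (B*u) * (0 * u + B * 1)))).
  { intros u hu. unfold z. apply (D_mult y (fun u => exp (B*u))). apply hd; auto.
    apply (D_comp (fun u => B * u) exp). apply D_mult; [apply D_const| apply D_id].
    exact (derivable_pt_lim_exp (B*u)). }
  destruct (mvt_open z (fun u => (y u * k u + m u) * exp (B*u) + y u * (exp (B*u) * (0 * u + B * 1))) 0 s sp) as [c [[hc1 hc2] hE]].
  { intros u hu. unfold z. apply C_mult. apply hc; lra.
    apply (C_comp (fun u => B*u) exp). apply C_mult; [apply C_const|].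
    apply (C_der _ _ _ (D_id u)). apply (C_der _ _ _ (derivable_pt_lim_exp _)). }
  { intros u hu. apply hdz. lra. }
  unfold z in hE. rewrite Rmult_0_r, exp_0, Rmult_1_r in hE.
  assert (ykc : 0 < y c) by (apply A1; lra).
  assert (kB : 0 <= k c + B) by (unfold B; assert (k mx <= k c) by (apply hmx; lra); lra).
  assert (mc : 0 <= m c) by (apply hm; lra).
  assert (ep : 0 < exp (B * c)) by apply exp_pos.
  assert (ep2 : 0 < exp (B * s)) by apply exp_pos.
  assert (0 <= (y c * k c + m c) * exp (B * c) + y c * (exp (B * c) * (0 * c + B * 1))).
  { replace ((y c * k c + m c) * exp (B * c) + y c * (exp (B * c) * (0 * c + B * 1)))
      with (exp (B*c) * (y c * (k c + B) + m c)) by ring.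
    apply Rmult_le_pos; [lra|]. assert (0 <= y c * (k c + B)) by (apply Rmult_le_pos; lra). lra. }
  assert (y s * exp (B * s) <= 0) by (apply Rmult_le_0_r; lra).
  assert (0 <= ((y c * k c + m c) * exp (B * c) + y c * (exp (B * c) * (0 * c + B * 1))) * (s - 0))
    by (apply Rmult_le_pos; lra).
  lra.
Qed.


Lemma dist_lb (p : R * R) m : 0 < m -> m <= fst p <= 1 - m -> m <= snd p <= 1 - m ->
  m <= dist_boundary p.
Proof.
  intros hm hx hr. unfold dist_boundary.
  set (S := fun d => exists q, in_boundary q /\
          d = sqrt ((fst p - fst q) ^ 2 + (snd p - snd q) ^ 2)).
  assert (lbS : forall d, S d -> m <= d).
  { intros d [q [[hq1 [hq2 hq3]] ->]].
    rewrite <- (sqrt_pow2 m) by lra. apply sqrt_le_1_alt.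
    assert (0 <= (fst p - fst q)^2) by (apply pow2_ge_0).
    assert (0 <= (snd p - snd q)^2) by (apply pow2_ge_0).
    destruct hq3 as [e|[e|[e|e]]]; rewrite e.
    - assert (m^2 <= (fst p - 0)^2) by (apply pow_incr; lra). lra.
    - assert (m^2 <= (1 - fst p)^2) by (apply pow_incr; lra).
      replace ((fst p - 1)^2) with ((1 - fst p)^2) by ring. lra.
    - assert (m^2 <= (snd p - 0)^2) by (apply pow_incr; lra). lra.
    - assert (m^2 <= (1 - snd p)^2) by (apply pow_incr; lra).
      replace ((snd p - 1)^2) with ((1 - snd p)^2) by ring. lra. }
  assert (S0 : S (sqrt ((fst p - 0) ^ 2 + (snd p - 0) ^ 2))).
  { exists (0,0). split; [|reflexivity]. unfold in_boundary; simpl; lra. }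
  destruct (Glb_Rbar_correct S) as [h1 h2].
  assert (hb : Rbar_le m (Glb_Rbar S)).
  { apply h2. intros d hd. simpl. apply lbS; auto. }
  specialize (h1 _ S0).
  destruct (Glb_Rbar S) as [l| |]; simpl in *; auto; contradiction.
Qed.

Definition phi (lam x1 x : R) := - (lam / 2) * (Rmax 0 (x1 - x)) ^ 2.
Definition dphi (lam x1 x : R) := lam * Rmax 0 (x1 - x).

Lemma sq_bound y h : Rabs ((Rmax 0 (y + h))^2 - (Rmax 0 y)^2 - 2 * Rmax 0 y * h) <= h^2.
Proof.
  unfold Rmax. destruct (Rle_dec 0 (y+h)); destruct (Rle_dec 0 y);
  apply Rabs_le; nra.
Qed.

Lemma phi_der lam x1 x : 0 <= lam -> derivable_pt_lim (phi lam x1) x (dphi lam x1 x).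
Proof.
  intros hl eps he.
  exists (mkposreal (eps / (lam + 1)) ltac:(apply Rdiv_lt_0_compat; lra)).
  intros h hn hh. simpl in hh.
  unfold phi, dphi.
  pose proof (sq_bound (x1 - x) (-h)) as H.
  replace (x1 - (x + h)) with (x1 - x + - h) by ring.
  assert (E : (- (lam / 2) * Rmax 0 (x1 - x + - h) ^ 2 - - (lam / 2) * Rmax 0 (x1 - x) ^ 2) / h
      - lam * Rmax 0 (x1 - x) =
      - (lam/2) * ((Rmax 0 (x1 - x + - h) ^ 2 - Rmax 0 (x1 - x) ^ 2 - 2 * Rmax 0 (x1 - x) * - h) / h)).
  { field. auto. }
  rewrite E, Rabs_mult, Rabs_div by auto.
  assert (Rabs h > 0) by (apply Rabs_pos_lt; auto).
  assert (Rabs (Rmax 0 (x1 - x + - h) ^ 2 - Rmax 0 (x1 - x) ^ 2 - 2 * Rmax 0 (x1 - x) * - h) / Rabs h <= Rabs h).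
  { apply (Rmult_le_reg_r (Rabs h)); auto. unfold Rdiv. rewrite Rmult_assoc, Rinv_l by lra.
    replace (Rabs h * Rabs h) with (h^2). lra. rewrite <- Rabs_mult. simpl. rewrite Rmult_1_r.
    rewrite Rabs_right; [ring| apply Rle_ge; nra]. }
  rewrite Rabs_left1 by lra.
  assert (Rabs h * (lam + 1) < eps).
  { apply (Rmult_lt_compat_r (lam+1)) in hh; [|lra]. unfold Rdiv in hh.
    rewrite Rmult_assoc, Rinv_l, Rmult_1_r in hh by lra. lra. }
  assert (0 <= Rabs (Rmax 0 (x1 - x + - h) ^ 2 - Rmax 0 (x1 - x) ^ 2 - 2 * Rmax 0 (x1 - x) * - h) / Rabs h).
  { apply Rdiv_le_0_compat; [apply Rabs_pos| lra]. }
  nra.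
Qed.


Lemma phi_bounds lam x1 x : 0 <= lam -> 0 <= x1 <= 1 -> 0 <= x <= 1 ->
  - (lam/2) <= phi lam x1 x <= 0.
Proof.
  intros hl h1 hx. unfold phi.
  assert (0 <= Rmax 0 (x1 - x) <= 1).
  { split; [apply Rmax_l|]. apply Rmax_lub; lra. }
  set (m := Rmax 0 (x1 - x)) in *.
  assert (0 <= m^2 <= 1) by (simpl; nra).
  split; nra.
Qed.

Lemma Rside (X rho : R -> R) (A Bf : R -> R -> R) lam x1 eta s :
 0 < eta -> 0 < s -> 0 <= lam -> 0 <= x1 <= 1 ->
 (forall t, 0 <= t -> continuity_pt X t /\ continuity_pt rho t) ->
 (forall t, 0 < t -> derivable_pt_lim X t (Bf (X t) (rho t)) /\
                     derivable_pt_lim rho t (rho t * A (X t) (rho t))) ->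
 (forall t, 0 <= t -> 0 < X t < 1 /\ 0 < rho t < 1) ->
 (forall x p, 0 < x < 1 -> 0 < p <= s -> eta <= A x p + dphi lam x1 x * Bf x p) ->
 exists T, forall t, T <= t -> s * exp (-(lam/2)) <= rho t.
Proof.
  intros he hs hl hx1 hc hd hin hly.
  set (y := fun t => ln (rho t) + phi lam x1 (X t)).
  set (L := ln s - lam/2).
  destruct (LB_ev y (fun t => A (X t) (rho t) + dphi lam x1 (X t) * Bf (X t) (rho t)) L eta he)
    as [T [hT0 hT]].
  - intros t ht. destruct (hc t ht) as [c1 c2]. destruct (hin t ht) as [i1 i2].
    unfold y. apply C_plus.
    + apply (C_comp rho ln); auto. apply (C_der _ _ _ (derivable_pt_lim_ln (rho t) ltac:(lra))).
    + apply (C_comp X (phi lam x1)); auto. apply (C_der _ _ _ (phi_der lam x1 _ hl)).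
  - intros t ht. destruct (hd t ht) as [d1 d2]. destruct (hin t ltac:(lra)) as [i1 i2].
    unfold y. eapply D_eq; [|apply D_plus].
    2: { apply (D_comp rho ln). exact d2. exact (derivable_pt_lim_ln (rho t) ltac:(lra)). }
    2: { apply (D_comp X (phi lam x1)). exact d1. apply phi_der; auto. }
    field. lra.
  - intros t ht hyL. destruct (hin t ltac:(lra)) as [i1 i2]. apply hly; auto.
    split; [lra|].
    destruct (Rle_or_lt (rho t) s) as [?|hgt]; auto. exfalso.
    apply ln_increasing in hgt; [|lra].
    pose proof (phi_bounds lam x1 (X t) hl hx1 ltac:(lra)).
    unfold y, L in hyL. lra.
  - exists T. intros t ht. destruct (hin t ltac:(lra)) as [i1 i2].
    specialize (hT t ht). unfold y, L in hT.
    pose proof (phi_bounds lam x1 (X t) hl hx1 ltac:(lra)).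
    rewrite <- (exp_ln (rho t)) by lra. rewrite <- (exp_ln s) at 1 by lra.
    rewrite <- exp_plus.
    destruct (Req_dec (ln s + - (lam/2)) (ln (rho t))) as [e|n].
    + rewrite e; lra.
    + left; apply exp_increasing; lra.
Qed.


Definition gg (al be mu x : R) := x*(1-x)*(al*x+be*(1-x)) + mu*(1-2*x).

Lemma Q1_pos x z : 1/2 < x -> x <= z -> z < 1 ->
  0 <= x + z - x^2 - 3*x*z - z^2 + 2*x^2*z + 2*x*z^2.
Proof.
  intros. replace (x + z - x^2 - 3*x*z - z^2 + 2*x^2*z + 2*x*z^2)
    with (1/4 + (2*x-1)*(2*z-1)*(2*x+2*z-1)/4) by field.
  assert (0 <= (2*x-1)*(2*z-1)) by nra.
  assert (0 <= (2*x-1)*(2*z-1)*(2*x+2*z-1)) by nra. lra.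
Qed.

Lemma Q2_pos x z : 1/2 < x -> x <= z -> z < 1 ->
  0 <= 2*x*z*(2-x-z) + 1 - 2*x - 2*z + x^2 + x*z + z^2.
Proof.
  intros. set (X := 1 - x). set (Z := 1 - z).
  replace (2*x*z*(2-x-z) + 1 - 2*x - 2*z + x^2 + x*z + z^2)
    with ((X+Z)*(1-(X+Z)) + X*Z*(2*(X+Z)-1)) by (unfold X, Z; ring).
  assert (0 < X < 1/2) by (unfold X; lra). assert (0 < Z < 1/2) by (unfold Z; lra).
  clearbody X Z.
  assert (0 <= X*Z) by (apply Rmult_le_pos; lra).
  assert (4*(X*Z) <= (X+Z)^2) by (pose proof (pow2_ge_0 (X-Z)); nra).
  assert (0 <= (X+Z)*(1-(X+Z))) by (apply Rmult_le_pos; lra).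
  destruct (Rle_or_lt (2*(X+Z)) 1).
  - assert (X*Z*(2*(X+Z)-1) >= - (X*Z)) by nra.
    assert (0 <= (X+Z)*(1 - 5/4*(X+Z))) by (apply Rmult_le_pos; lra).
    nra.
  - assert (0 <= X*Z*(2*(X+Z)-1)) by nra. lra.
Qed.

Lemma gg_pos_left al be mu z x : 0 < al -> 0 < be -> 0 < mu -> 0 < z < 1 ->
  gg al be mu z > 0 -> 0 <= x <= z -> gg al be mu x > 0.
Proof.
  intros ha hb hm hz hg hx. unfold gg in *.
  destruct (Rle_or_lt x (1/2)) as [h|h].
  - destruct (Req_dec x 0) as [->|n]; [lra|].
    assert (0 < x*(1-x)) by (apply Rmult_lt_0_compat; lra).
    assert (0 < al*x+be*(1-x)) by nra.
    assert (0 < x*(1-x)*(al*x+be*(1-x))) by (apply Rmult_lt_0_compat; lra).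
    nra.
  - pose proof (Q1_pos x z h (proj2 hx) (proj2 hz)) as q1.
    pose proof (Q2_pos x z h (proj2 hx) (proj2 hz)) as q2.
    assert (e1 : 0 <= x^2*(1-x)*(2*z-1) - z^2*(1-z)*(2*x-1)).
    { replace (x^2*(1-x)*(2*z-1) - z^2*(1-z)*(2*x-1)) with
        ((z-x)*(x + z - x^2 - 3*x*z - z^2 + 2*x^2*z + 2*x*z^2)) by ring.
      apply Rmult_le_pos; lra. }
    assert (e2 : 0 <= x*(1-x)^2*(2*z-1) - z*(1-z)^2*(2*x-1)).
    { replace (x*(1-x)^2*(2*z-1) - z*(1-z)^2*(2*x-1)) with
        ((z-x)*(2*x*z*(2-x-z) + 1 - 2*x - 2*z + x^2 + x*z + z^2)) by ring.
      apply Rmult_le_pos; lra. }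
    assert (key : (2*z-1) * (x * (1 - x) * (al * x + be * (1 - x)) + mu * (1 - 2 * x))
       >= (2*x-1) * (z * (1 - z) * (al * z + be * (1 - z)) + mu * (1 - 2 * z))).
    { assert (0 <= al * (x^2*(1-x)*(2*z-1) - z^2*(1-z)*(2*x-1))) by (apply Rmult_le_pos; lra).
      assert (0 <= be * (x*(1-x)^2*(2*z-1) - z*(1-z)^2*(2*x-1))) by (apply Rmult_le_pos; lra).
      nra. }
    assert (0 < (2*x-1) * (z * (1 - z) * (al * z + be * (1 - z)) + mu * (1 - 2 * z)))
      by (apply Rmult_lt_0_compat; lra).
    nra.
Qed.

Lemma gg_lip al be mu z x : 0 < al -> 0 < be -> 0 < mu <= 1 -> 0 <= z <= 1 -> 0 <= x <= 1 ->
  z <= x -> gg al be mu z - (3*al + 3*be + 2) * (x - z) <= gg al be mu x.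
Proof.
  intros ha hb hm hz hx hzx. unfold gg.
  set (Q := al*(x+z) - al*(x^2+x*z+z^2) + be*(1 - 2*(x+z) + x^2+x*z+z^2) - 2*mu).
  assert (E : x * (1 - x) * (al * x + be * (1 - x)) + mu * (1 - 2 * x) -
     (z * (1 - z) * (al * z + be * (1 - z)) + mu * (1 - 2 * z)) = (x - z) * Q) by (unfold Q; ring).
  assert (Qb : - (3*al + 3*be + 2) <= Q).
  { unfold Q.
    assert (x^2+x*z+z^2 <= 3) by nra.
    assert (0 <= x^2+x*z+z^2) by nra.
    assert (al*(x+z) >= 0) by nra.
    assert (- al*(x^2+x*z+z^2) >= -3*al) by nra.
    assert (be*(1 - 2*(x+z) + x^2+x*z+z^2) >= -3*be) by nra.
    lra. }
  assert ((x - z) * Q >= (x-z) * (- (3*al + 3*be + 2))) by nra.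
  lra.
Qed.

Lemma gg_cont al be mu c : continuity_pt (gg al be mu) c.
Proof. unfold gg. reg. Qed.


Lemma Lyap al be mu k z C : 0 < al -> 0 < be -> 0 < mu <= 1 -> 0 < k -> 0 < z < 1 -> 0 <= C ->
  gg al be mu z > 0 ->
  exists lam x1 eta s, 0 <= lam /\ 0 <= x1 <= 1 /\ 0 < eta /\ 0 < s /\ s <= 1 /\
  forall x p Bv, 0 <= x <= 1 -> 0 <= p <= s -> gg al be mu x - p * C <= Bv ->
    eta <= (1 - p) * (k * (x - z)) + dphi lam x1 x * Bv.
Proof.
  intros ha hb hm hk hz hC hg.
  set (g0 := gg al be mu z).
  set (Lg := 3*al + 3*be + 2).
  assert (hLg : 0 < Lg) by (unfold Lg; lra).
  set (sig := Rmin (g0 / (2*Lg)) ((1 - z)/2)).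
  assert (hg0 : 0 < g0) by exact hg.
  assert (hsig : 0 < sig) by (unfold sig; apply Rmin_glb_lt; [apply Rdiv_lt_0_compat|]; lra).
  assert (hsig1 : sig <= (1-z)/2) by apply Rmin_r.
  assert (hsig2 : sig * Lg <= g0 / 2).
  { assert (sig <= g0/(2*Lg)) by apply Rmin_l.
    apply (Rmult_le_compat_r Lg) in H; [|lra].
    replace (g0 / (2*Lg) * Lg) with (g0/2) in H by (field; repeat split; lra). lra. }
  set (x1 := z + sig).
  assert (hx1 : 0 < x1 <= 1) by (unfold x1; lra).
  assert (gpos : forall x, 0 <= x <= x1 -> 0 < gg al be mu x).
  { intros x hx. destruct (Rle_or_lt x z).
    - apply (gg_pos_left al be mu z); auto; lra.
    - pose proof (gg_lip al be mu z x ha hb hm ltac:(lra) ltac:(lra) ltac:(lra)).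
      fold Lg in H0. fold g0 in H0.
      assert (Lg * (x - z) <= Lg * sig) by (apply Rmult_le_compat_l; unfold x1 in hx; lra).
      lra. }
  destruct (continuity_ab_min (gg al be mu) 0 x1 ltac:(lra) (fun c _ => gg_cont al be mu c))
    as [mx [hmx hmx1]].
  set (gm := gg al be mu mx).
  assert (hgm : 0 < gm) by (apply gpos; auto).
  set (lam := (k*z + 1)/(x1*gm)).
  assert (hlam : 0 < lam) by (unfold lam; apply Rdiv_lt_0_compat; [nra| apply Rmult_lt_0_compat; lra]).
  set (eta := Rmin 1 (k*sig) / 2).
  assert (heta : 0 < eta) by (unfold eta; assert (0 < Rmin 1 (k*sig)) by (apply Rmin_glb_lt; nra); lra).
  set (s := Rmin 1 (eta / (k + lam*C))).
  assert (hKC : 0 < k + lam * C) by nra.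
  assert (hs : 0 < s) by (apply Rmin_glb_lt; [lra| apply Rdiv_lt_0_compat; lra]).
  assert (hs1 : s <= 1) by apply Rmin_l.
  assert (hs2 : s * (k + lam*C) <= eta).
  { assert (s <= eta / (k + lam*C)) by apply Rmin_r.
    apply (Rmult_le_compat_r (k + lam*C)) in H; [|lra].
    replace (eta / (k + lam * C) * (k + lam * C)) with eta in H by (field; repeat split; lra). lra. }
  exists lam, x1, eta, s. split; [lra|]. split; [lra|]. split; [lra|]. split; [lra|]. split; [lra|].
  intros x p Bv hx hp hB.
  unfold dphi. set (m := Rmax 0 (x1 - x)).
  assert (hm0 : 0 <= m) by apply Rmax_l.
  assert (hm1 : m <= 1) by (apply Rmax_lub; lra).
  assert (hP : 2 * eta <= k * (x - z) + lam * m * gg al be mu x).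
  { unfold eta. destruct (Rle_or_lt x x1) as [hle|hgt].
    - assert (em : m = x1 - x) by (unfold m; rewrite Rmax_right; lra).
      rewrite em.
      assert (gm <= gg al be mu x) by (apply hmx; lra).
      assert (lam * (x1 - x) * gm <= lam * (x1 - x) * gg al be mu x)
        by (apply Rmult_le_compat_l; [apply Rmult_le_pos|]; lra).
      assert (e : lam * (x1 - x) * gm = (k*z+1) * (1 - x/x1)).
      { unfold lam. field. split; lra. }
      set (t := x / x1) in *.
      assert (ht : 0 <= t <= 1).
      { unfold t; split. apply Rdiv_le_0_compat; lra.
        apply (Rmult_le_reg_r x1); [lra|]. unfold Rdiv; rewrite Rmult_assoc, Rinv_l; lra. }
      assert (ex : x = t * x1) by (unfold t; field; lra).
      assert (k * (x - z) + (k*z+1)*(1-t) = t * (k*sig) + (1 - t) * 1).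
      { rewrite ex. unfold x1. ring. }
      assert (Rmin 1 (k*sig) <= t * (k*sig) + (1 - t) * 1).
      { pose proof (Rmin_l 1 (k*sig)). pose proof (Rmin_r 1 (k*sig)). nra. }
      lra.
    - assert (em : m = 0) by (unfold m; rewrite Rmax_left; lra).
      rewrite em. pose proof (Rmin_r 1 (k*sig)). unfold x1 in hgt. nra. }
  assert (hBv : lam * m * (gg al be mu x - p * C) <= lam * m * Bv)
    by (apply Rmult_le_compat_l; [apply Rmult_le_pos|]; lra).
  assert (hpert : p * (k * (x - z)) + p * (lam * m * C) <= eta).
  { assert (p * (k * (x - z)) <= p * k) by (apply Rmult_le_compat_l; nra).
    assert (p * (lam * m * C) <= p * (lam * C)).
    { apply Rmult_le_compat_l; [lra|]. assert (lam * m * C <= lam * 1 * C); [|lra].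
      apply Rmult_le_compat_r; [lra|]. apply Rmult_le_compat_l; lra. }
    assert (p * (k + lam * C) <= s * (k + lam * C)) by (apply Rmult_le_compat_r; lra).
    lra. }
  nra.
Qed.


Lemma F_decomp a b c d x r :
  x * r * (- c + d - a + b) + x * (a - b) - r * (d + b) + b =
  (x*a + (1-x)*b) - r * ((1-x)*(d+b) + x*(c+a)).
Proof. ring. Qed.

Lemma Fbounds a b c d x r : 0 < a -> 0 < b -> 0 < c -> 0 < d -> 0 <= x <= 1 -> 0 <= r <= 1 ->
  - (a+b+c+d) <= x * r * (- c + d - a + b) + x * (a - b) - r * (d + b) + b <= a+b+c+d.
Proof.
  intros. rewrite F_decomp.
  assert (0 <= x*a + (1-x)*b <= a + b) by nra.
  assert (0 <= (1-x)*(d+b) + x*(c+a) <= a+b+c+d) by nra.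
  assert (0 <= r * ((1-x)*(d+b) + x*(c+a)) <= a+b+c+d) by nra.
  lra.
Qed.

Lemma fx_lower a b c d mu x r : 0 < a -> 0 < b -> 0 < c -> 0 < d -> 0 < mu <= 1 ->
  0 < x -> x <= mu / (2*(a+b+c+d+2)) -> 0 < r < 1 -> mu/2 <= fx a b c d mu x r.
Proof.
  intros ha hb hc hd hm hx hx2 hr. unfold fx.
  set (S := a+b+c+d) in *.
  assert (x <= 1) by (assert (mu / (2*(S+2)) <= 1); [apply (Rmult_le_reg_r (2*(S+2))); [unfold S; lra|];
     unfold Rdiv; rewrite Rmult_assoc, Rinv_l by (unfold S; lra); unfold S; nra | lra]).
  pose proof (Fbounds a b c d x r ha hb hc hd ltac:(lra) ltac:(lra)) as [F1 F2].
  fold S in F1.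
  set (F := x * r * (- c + d - a + b) + x * (a - b) - r * (d + b) + b) in *.
  assert (x * (1 - x) * F >= - x * S).
  { assert (0 <= x*(1-x) <= x) by nra.
    assert (0 <= S) by (unfold S; lra). nra. }
  assert (x * (S + 2) <= mu / 2).
  { apply (Rmult_le_compat_r (S+2)) in hx2; [|unfold S; lra].
    replace (mu / (2 * (S + 2)) * (S + 2)) with (mu/2) in hx2 by (field; unfold S; lra). lra. }
  nra.
Qed.

Lemma fx_upper a b c d mu x r : 0 < a -> 0 < b -> 0 < c -> 0 < d -> 0 < mu <= 1 ->
  x < 1 -> 1 - x <= mu / (2*(a+b+c+d+2)) -> 0 < r < 1 -> mu/2 <= - fx a b c d mu x r.
Proof.
  intros ha hb hc hd hm hx hx2 hr. unfold fx.
  set (S := a+b+c+d) in *.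
  assert (1 - x <= 1) by (assert (mu / (2*(S+2)) <= 1); [apply (Rmult_le_reg_r (2*(S+2))); [unfold S; lra|];
     unfold Rdiv; rewrite Rmult_assoc, Rinv_l by (unfold S; lra); unfold S; nra | lra]).
  pose proof (Fbounds a b c d x r ha hb hc hd ltac:(lra) ltac:(lra)) as [F1 F2].
  fold S in F2.
  set (F := x * r * (- c + d - a + b) + x * (a - b) - r * (d + b) + b) in *.
  assert (x * (1 - x) * F <= (1-x) * S).
  { assert (0 <= x*(1-x) <= 1 - x) by nra.
    assert (0 <= S) by (unfold S; lra). nra. }
  assert ((1 - x) * (S + 2) <= mu / 2).
  { apply (Rmult_le_compat_r (S+2)) in hx2; [|unfold S; lra].
    replace (mu / (2 * (S + 2)) * (S + 2)) with (mu/2) in hx2 by (field; unfold S; lra). lra. }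
  nra.
Qed.

Lemma fx_ge_gg a b c d mu x p : 0 < a -> 0 < b -> 0 < c -> 0 < d -> 0 <= x <= 1 -> 0 <= p <= 1 ->
  gg a b mu x - p * (a+b+c+d) <= fx a b c d mu x p.
Proof.
  intros. unfold gg, fx.
  replace (x * (1 - x) * (x * p * (- c + d - a + b) + x * (a - b) - p * (d + b) + b) + mu * (1 - 2 * x))
    with (x * (1 - x) * (a * x + b * (1 - x)) + mu * (1 - 2 * x) - p * (x*(1-x)*((1-x)*(d+b) + x*(c+a)))) by ring.
  assert (0 <= x*(1-x) <= 1) by nra.
  assert (0 <= (1-x)*(d+b) + x*(c+a) <= a+b+c+d) by nra.
  assert (x*(1-x)*((1-x)*(d+b) + x*(c+a)) <= a+b+c+d) by nra.
  nra.
Qed.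

Lemma fx_ge_gg2 a b c d mu X p : 0 < a -> 0 < b -> 0 < c -> 0 < d -> 0 <= X <= 1 -> 0 <= p <= 1 ->
  gg d c mu X - p * (a+b+c+d) <= - fx a b c d mu (1 - X) (1 - p).
Proof.
  intros. unfold gg, fx.
  replace (- ((1 - X) * (1 - (1 - X)) * ((1 - X) * (1 - p) * (- c + d - a + b) + (1 - X) * (a - b) - (1 - p) * (d + b) + b) + mu * (1 - 2 * (1 - X))))
    with (X * (1 - X) * (d * X + c * (1 - X)) + mu * (1 - 2 * X) - p * (X*(1-X)*(X*(d+b) + (1-X)*(c+a)))) by ring.
  assert (0 <= X*(1-X) <= 1) by nra.
  assert (0 <= X*(d+b) + (1-X)*(c+a) <= a+b+c+d) by nra.
  assert (X*(1-X)*(X*(d+b) + (1-X)*(c+a)) <= a+b+c+d) by nra.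
  nra.
Qed.

Lemma gg_z1 a b mu th : 0 < a -> 0 < b -> 0 < mu <= 1 -> 0 < th ->
  - (th * a + th ^ 2 * b) < (th - 1) * (th + 1) ^ 2 -> gg a b mu (/ (th + 1)) > 0.
Proof.
  intros ha hb hm ht hlo.
  assert (E : gg a b mu (/ (th + 1)) * (th + 1)^3 = th*a + th^2*b + mu*(th-1)*(th+1)^2)
    by (unfold gg; field; lra).
  assert (0 < th*a + th^2*b + mu*(th-1)*(th+1)^2).
  { assert (0 < (th+1)^2) by nra.
    destruct (Rle_or_lt 1 th).
    - assert (0 <= mu*(th-1)*(th+1)^2) by (apply Rmult_le_pos; [apply Rmult_le_pos|]; lra).
      nra.
    - assert (0 <= (1-mu)*(1-th)) by (apply Rmult_le_pos; lra).
      assert (0 <= (1-mu)*(1-th)*(th+1)^2) by (apply Rmult_le_pos; lra).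
      assert (mu*(th-1)*(th+1)^2 >= (th-1)*(th+1)^2) by nra. lra. }
  assert (0 < (th+1)^3) by (apply pow_lt; lra).
  destruct (Rle_or_lt (gg a b mu (/ (th + 1))) 0); [|lra].
  assert (gg a b mu (/ (th + 1)) * (th + 1)^3 <= 0) by (apply Rmult_le_0_r; lra). lra.
Qed.

Lemma gg_z2 c d mu th : 0 < c -> 0 < d -> 0 < mu <= 1 -> 0 < th ->
  (th - 1) * (th + 1) ^ 2 < th * c + th ^ 2 * d -> gg d c mu (th / (th + 1)) > 0.
Proof.
  intros hc hd hm ht hhi.
  assert (E : gg d c mu (th / (th + 1)) * (th + 1)^3 = th*(d*th + c) + mu*(1-th)*(th+1)^2)
    by (unfold gg; field; lra).
  assert (0 < th*(d*th + c) + mu*(1-th)*(th+1)^2).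
  { assert (0 < (th+1)^2) by nra.
    destruct (Rle_or_lt th 1).
    - assert (0 <= mu*(1-th)*(th+1)^2) by (apply Rmult_le_pos; [apply Rmult_le_pos|]; lra).
      nra.
    - assert (0 <= (1-mu)*(th-1)) by (apply Rmult_le_pos; lra).
      assert (0 <= (1-mu)*(th-1)*(th+1)^2) by (apply Rmult_le_pos; lra).
      assert (mu*(1-th)*(th+1)^2 >= (1-th)*(th+1)^2) by nra. nra. }
  assert (0 < (th+1)^3) by (apply pow_lt; lra).
  destruct (Rle_or_lt (gg d c mu (th / (th + 1))) 0); [|lra].
  assert (gg d c mu (th / (th + 1)) * (th + 1)^3 <= 0) by (apply Rmult_le_0_r; lra). lra.
Qed.


Lemma C_opp f x : continuity_pt f x -> continuity_pt (fun u => - f u) x.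
Proof. intros; now apply continuity_pt_opp. Qed.

Ltac cont := repeat first [ assumption | apply C_minus | apply C_plus | apply C_opp | apply C_mult | apply C_const | assumption ].

Theorem lemma13 (a b c d theta : R)
  (ha : 0 < a) (hb : 0 < b) (hc : 0 < c) (hd : 0 < d) (htheta : 0 < theta)
  (hlo : - (theta * a + theta ^ 2 * b) < (theta - 1) * (theta + 1) ^ 2)
  (hhi : (theta - 1) * (theta + 1) ^ 2 < theta * c + theta ^ 2 * d) :
  forall mu : R, 0 < mu <= 1 -> boundary_repelling a b c d theta mu.
Proof.
  intros mu hmu.
  set (S := a+b+c+d).
  set (ex := mu / (2*(a+b+c+d+2))).
  assert (hex : 0 < ex) by (unfold ex; apply Rdiv_lt_0_compat; lra).
  assert (hz1 : 0 < / (theta+1) < 1).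
  { split. apply Rinv_0_lt_compat; lra.
    rewrite <- Rinv_1. apply Rinv_lt_contravar; lra. }
  assert (hz2 : 0 < theta / (theta+1) < 1).
  { split. apply Rdiv_lt_0_compat; lra.
    apply (Rmult_lt_reg_r (theta+1)); [lra|]. unfold Rdiv. rewrite Rmult_assoc, Rinv_l; lra. }
  destruct (Lyap a b mu (theta+1) (/ (theta+1)) S ha hb hmu ltac:(lra) hz1 ltac:(unfold S; lra)
     (gg_z1 a b mu theta ha hb hmu htheta hlo))
    as (lam1 & x11 & eta1 & s1 & hl1 & hx11 & he1 & hs1 & hs1' & HL1).
  destruct (Lyap d c mu (theta+1) (theta / (theta+1)) S hd hc hmu ltac:(lra) hz2 ltac:(unfold S; lra)
     (gg_z2 c d mu theta hc hd hmu htheta hhi))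
    as (lam2 & x12 & eta2 & s2 & hl2 & hx12 & he2 & hs2 & hs2' & HL2).
  set (m := Rmin ex (Rmin (s1 * exp (-(lam1/2))) (s2 * exp (-(lam2/2))))).
  assert (hm : 0 < m).
  { unfold m. repeat apply Rmin_glb_lt; auto; apply Rmult_lt_0_compat; auto; apply exp_pos. }
  assert (m1 : m <= ex) by apply Rmin_l.
  assert (m2 : m <= s1 * exp (-(lam1/2))) by (eapply Rle_trans; [apply Rmin_r| apply Rmin_l]).
  assert (m3 : m <= s2 * exp (-(lam2/2))) by (eapply Rle_trans; [apply Rmin_r| apply Rmin_r]).
  exists (m/2). split; [lra|].
  intros x r [hcont hder] hx0 hr0.
  assert (cx : forall t, 0 <= t -> continuity_pt x t) by (intros t ht; apply (hcont t ht)).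
  assert (cr : forall t, 0 <= t -> continuity_pt r t) by (intros t ht; apply (hcont t ht)).
  set (F := fun t => x t * r t * (- c + d - a + b) + x t * (a - b) - r t * (d + b) + b).
  assert (cF : forall t, 0 <= t -> continuity_pt F t).
  { intros t ht. pose proof (cx t ht). pose proof (cr t ht). unfold F. cont. }
  assert (ix1 : forall t, 0 <= t -> 0 < x t).
  { apply (posA x (fun t => (1 - x t) * F t - 2 * mu) (fun _ => mu)).
    - apply hx0.
    - exact cx.
    - intros t ht. pose proof (cx t ht). pose proof (cF t ht). cont.
    - intros; cbv beta; lra.
    - intros t ht. eapply D_eq; [|apply (proj1 (hder t ht))]. unfold fx, F. ring. }
  assert (ix2 : forall t, 0 <= t -> 0 < 1 - x t).
  { apply (posA (fun t => 1 - x t) (fun t => - x t * F t - 2 * mu) (fun _ => mu)).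
    - lra.
    - intros t ht. pose proof (cx t ht). cont.
    - intros t ht. pose proof (cx t ht). pose proof (cF t ht). cont.
    - intros; cbv beta; lra.
    - intros t ht. eapply D_eq; [|apply D_minus; [apply D_const| apply (proj1 (hder t ht))]].
      unfold fx, F. ring. }
  assert (ir1 : forall t, 0 <= t -> 0 < r t).
  { apply (posA r (fun t => (1 - r t) * (theta * x t - (1 - x t))) (fun _ => 0)).
    - apply hr0.
    - exact cr.
    - intros t ht. pose proof (cx t ht). pose proof (cr t ht). cont.
    - intros; cbv beta; lra.
    - intros t ht. eapply D_eq; [|apply (proj2 (hder t ht))]. unfold fr. ring. }
  assert (ir2 : forall t, 0 <= t -> 0 < 1 - r t).
  { apply (posA (fun t => 1 - r t) (fun t => - r t * (theta * x t - (1 - x t))) (fun _ => 0)).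
    - lra.
    - intros t ht. pose proof (cr t ht). cont.
    - intros t ht. pose proof (cx t ht). pose proof (cr t ht). cont.
    - intros; cbv beta; lra.
    - intros t ht. eapply D_eq; [|apply D_minus; [apply D_const| apply (proj2 (hder t ht))]].
      unfold fr. ring. }
  destruct (LB_ev x (fun t => fx a b c d mu (x t) (r t)) ex (mu/2) ltac:(lra) cx
     (fun t ht => proj1 (hder t ht))) as [T1 [hT1 HT1]].
  { intros t ht hle. apply fx_lower; auto. apply ix1; lra.
    pose proof (ir1 t ltac:(lra)); pose proof (ir2 t ltac:(lra)); lra. }
  destruct (LB_ev (fun t => 1 - x t) (fun t => 0 - fx a b c d mu (x t) (r t)) ex (mu/2) ltac:(lra))
     as [T2 [hT2 HT2]].
  { intros t ht. pose proof (cx t ht). cont. }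
  { intros t ht. apply D_minus; [apply D_const| apply (proj1 (hder t ht))]. }
  { intros t ht hle. rewrite Rminus_0_l. apply fx_upper; auto.
    pose proof (ix2 t ltac:(lra)); lra.
    pose proof (ir1 t ltac:(lra)); pose proof (ir2 t ltac:(lra)); lra. }
  destruct (Rside x r (fun x p => (1 - p) * ((theta+1) * (x - / (theta+1))))
     (fun x p => fx a b c d mu x p) lam1 x11 eta1 s1 he1 hs1 hl1 hx11) as [T3 HT3].
  { intros t ht; split; auto. }
  { intros t ht. split. apply (proj1 (hder t ht)).
    eapply D_eq; [|apply (proj2 (hder t ht))]. unfold fr. field. lra. }
  { intros t ht. pose proof (ix1 t ht); pose proof (ix2 t ht); pose proof (ir1 t ht); pose proof (ir2 t ht).
    lra. }
  { intros y p hy hp. apply HL1; [lra|lra|]. apply fx_ge_gg; auto; lra. }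
  destruct (Rside (fun t => 1 - x t) (fun t => 1 - r t)
     (fun x p => (1 - p) * ((theta+1) * (x - theta / (theta+1))))
     (fun x p => - fx a b c d mu (1 - x) (1 - p)) lam2 x12 eta2 s2 he2 hs2 hl2 hx12) as [T4 HT4].
  { intros t ht; split; [pose proof (cx t ht)| pose proof (cr t ht)]; cont. }
  { intros t ht. split.
    - eapply D_eq; [|apply D_minus; [apply D_const| apply (proj1 (hder t ht))]].
      replace (1 - (1 - x t)) with (x t) by ring. replace (1 - (1 - r t)) with (r t) by ring. ring.
    - eapply D_eq; [|apply D_minus; [apply D_const| apply (proj2 (hder t ht))]].
      unfold fr. field. lra. }
  { intros t ht. pose proof (ix1 t ht); pose proof (ix2 t ht); pose proof (ir1 t ht); pose proof (ir2 t ht).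
    lra. }
  { intros y p hy hp. apply HL2; [lra|lra|]. apply fx_ge_gg2; auto; lra. }
  exists (m/2). split; [lra|].
  exists (Rmax (Rmax T1 T2) (Rmax T3 T4)).
  intros t ht.
  assert (t1 : T1 <= t) by (eapply Rle_trans; [|exact ht]; eapply Rle_trans; [apply Rmax_l| apply Rmax_l]).
  assert (t2 : T2 <= t) by (eapply Rle_trans; [|exact ht]; eapply Rle_trans; [apply Rmax_r| apply Rmax_l]).
  assert (t3 : T3 <= t) by (eapply Rle_trans; [|exact ht]; eapply Rle_trans; [apply Rmax_l| apply Rmax_r]).
  assert (t4 : T4 <= t) by (eapply Rle_trans; [|exact ht]; eapply Rle_trans; [apply Rmax_r| apply Rmax_r]).
  specialize (HT1 t t1). specialize (HT2 t t2). specialize (HT3 t t3). specialize (HT4 t t4).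
  replace (m/2 + m/2) with m by field.
  apply dist_lb; simpl; lra.
Qed.
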